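(* Let $\mathcal{G}$ be the cyclic digraph on $n>1$ nodes, with the weights and matrices described in the context. Let $r$ be the largest modulus among the eigenvalues of $M_0=\begin{bmatrix} I-L & 0\\ L & S\end{bmatrix}$ that remain after two copies of the eigenvalue $1$ are removed (eigenvalues counted with algebraic multiplicity). If $$\epsilon\in\Big(0,\ \frac{\sqrt2}{3+\sqrt5}\,(1-r)\Big),$$ then the deterministic algorithm with parameter $\epsilon$ achieves average consensus. Moreover, $$r=\sqrt{1-\tfrac1n+\tfrac1{2n^2}+\tfrac1n\big(1-\tfrac1{2n}\big)\cos\tfrac{2\pi}{n}}.$$
   Context: Setting: the cyclic digraph has $\mathcal{V}=\{1,\dots,n\}$ and $\mathcal{E}=\{(1,2),(2,3),\dots,(n-1,n),(n,1)\}$. An edge $(j,i)$ means that $j$ sends to $i$. Its degree is $d=1$. Weights: $a_{ij}=1/(2n)$ if $(j,i)\in\mathcal{E}$ and $0$ otherwise. Also $b_{ih}=1/n$ if $(i,h)\in\mathcal{E}$ and $0$ otherwise. Matrices: $L=D-A$, where $A=[a_{ij}]$ and $D=\mathrm{diag}(\sum_j a_{ij})$. $S=(I-\tilde D)+B$, where $B=[b_{ih}]^T$ and $\tilde D=\mathrm{diag}(\sum_h b_{ih})$. Also $M=\begin{bmatrix} I-L & \epsilon I\\ L & S-\epsilon I\end{bmatrix}$. Deterministic algorithm: $(x(k+1),s(k+1))^T=M(x(k),s(k))^T$ with $s(0)=0$. Average consensus: for every $x(0)\in\mathbb{R}^n$, $(x(k),s(k))\to(x_a\mathbf{1},0)$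 where $x_a=\mathbf{1}^Tx(0)/n$. *)

(* Defs.v *)
From HB Require Import structures.
From mathcomp Require Import all_boot all_order all_algebra.
From mathcomp Require Import all_classical all_reals all_analysis.
From mathcomp Require Import complex.
Set Implicit Arguments. Unset Strict Implicit. Unset Printing Implicit Defensive.
Import Order.TTheory GRing.Theory Num.Theory.
Import numFieldNormedType.Exports.
Local Open Scope classical_set_scope.
Local Open Scope ring_scope.

Section Cyclic.
Variable R : realType.
Variable n : nat.

(* Edge set of the cyclic digraph on nodes 0..n-1 (paper: 1..n):
   (j, i) is an edge iff i = j+1 (mod n), i.e. edges (1,2),...,(n-1,n),(n,1). *)
Definition cyc_edge (j i : 'I_n) : bool := val i == ((val j).+1 %% n)%N.

Definition cycA : 'M[R]_n :=
  \matrix_(i, j) (if cyc_edge j i then (2 * n)%:R^-1 else 0).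
Definition cycD : 'M[R]_n := \matrix_(i, j) ((i == j)%:R * \sum_k cycA i k).
Definition cycL : 'M[R]_n := cycD - cycA.

Definition cycb : 'M[R]_n :=
  \matrix_(i, h) (if cyc_edge i h then n%:R^-1 else 0).
Definition cycB : 'M[R]_n := cycb^T.
Definition cycDt : 'M[R]_n := \matrix_(i, j) ((i == j)%:R * \sum_h cycb i h).
Definition cycS : 'M[R]_n := (1%:M - cycDt) + cycB.

Definition cycM (eps : R) : 'M[R]_(n + n) :=
  block_mx (1%:M - cycL) (eps%:M) cycL (cycS - eps%:M).

Definition cycM0 : 'M[R]_(n + n) := block_mx (1%:M - cycL) 0 cycL cycS.

Definition reduced_charpoly : {poly R} := char_poly cycM0 %/ ('X - 1) ^+ 2.

Definition largest_root_modulus (p : {poly R}) (r : R) : Prop :=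
  (exists2 z : R[i], root (map_poly (real_complex R) p) z & `|z| = real_complex R r) /\
  (forall z : R[i], root (map_poly (real_complex R) p) z -> `|z| <= real_complex R r).

(* State (x(k), s(k)) stacked as a column vector of size n + n. *)
Definition cyc_state (eps : R) (x0 : 'cV[R]_n) (k : nat) : 'cV[R]_(n + n) :=
  iter k (fun z => cycM eps *m z) (col_mx x0 0).

Definition average_consensus (eps : R) : Prop :=
  forall x0 : 'cV[R]_n,
    let xa := (\sum_i x0 i 0) / n%:R in
    forall i : 'I_n,
      ((fun k => usubmx (cyc_state eps x0 k) i 0) @ \oo --> xa) /\
      ((fun k => dsubmx (cyc_state eps x0 k) i 0) @ \oo --> (0 : R)).

End Cyclic.

(* Main.v *)
Require Import Defs.
From HB Require Import structures.
From mathcomp Require Import all_boot all_order all_algebra.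
From mathcomp Require Import all_classical all_reals all_analysis.
From mathcomp Require Import complex.
From mathcomp Require Import ring lra zify.
Import Order.TTheory GRing.Theory Num.Theory.
Local Open Scope ring_scope.

Module A.
Section Mats.
Variable R : realType.
Variable n : nat.

Definition Pm (T : pzRingType) : 'M[T]_n := \matrix_(i, j) (cyc_edge j i)%:R.
Definition Qm (c d : R) : 'M[R]_n := c%:M + d *: Pm R.
Definition aa : R := (2 * n)%:R^-1.

Lemma edgeE (j i : 'I_n) : cyc_edge j i = (i == ordS j).
Proof. by []. Qed.

Lemma edgeE' (j i : 'I_n) : cyc_edge j i = (j == ord_pred i).
Proof.
rewrite edgeE; apply/eqP/eqP => [->|->]; [by rewrite ordSK | by rewrite ord_predK].
Qed.

Lemma sum_edge_col (f : 'I_n -> R) i :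
  \sum_k (if cyc_edge k i then f k else 0) = f (ord_pred i).
Proof.
under eq_bigr do rewrite edgeE'.
by rewrite -big_mkcond big_pred1_eq.
Qed.

Lemma sum_edge_row (f : 'I_n -> R) i :
  \sum_k (if cyc_edge i k then f k else 0) = f (ordS i).
Proof.
under eq_bigr do rewrite edgeE.
by rewrite -big_mkcond big_pred1_eq.
Qed.

Lemma QmE c d i j : Qm c d i j = c * (i == j)%:R + d * (cyc_edge j i)%:R.
Proof. by rewrite !mxE mulr_natr. Qed.

Hypothesis Hn : (1 < n)%N.

Lemma n_neq0 : (n%:R : R) != 0.
Proof. by rewrite pnatr_eq0; case: n Hn. Qed.

Lemma aaE : aa = (2 * n%:R)^-1.
Proof. by rewrite /aa natrM. Qed.

Lemma cycL_Qm : cycL R n = Qm aa (- aa).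
Proof.
apply/matrixP => i j; rewrite QmE !mxE.
under eq_bigr do rewrite mxE.
rewrite sum_edge_col.
rewrite /aa; move: ((2 * n)%:R^-1 : R) => t.
by case: cyc_edge => /=; ring.
Qed.

Lemma IL_Qm : 1%:M - cycL R n = Qm (1 - aa) aa.
Proof.
rewrite cycL_Qm; apply/matrixP => i j; rewrite !QmE !mxE ?QmE; ring.
Qed.

Lemma cycS_Qm : cycS R n = Qm (1 - 2 * aa) (2 * aa).
Proof.
have h : (n%:R : R)^-1 = 2 * aa by rewrite aaE; field; rewrite n_neq0.
apply/matrixP => i j; rewrite QmE !mxE.
under eq_bigr do rewrite mxE.
rewrite sum_edge_row.
rewrite h /aa; move: ((2 * n)%:R^-1 : R) => t.
by case: cyc_edge => /=; ring.
Qed.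

Lemma SE_Qm eps : cycS R n - eps%:M = Qm (1 - 2 * aa - eps) (2 * aa).
Proof.
rewrite cycS_Qm; apply/matrixP => i j; rewrite !QmE !mxE ?QmE; ring.
Qed.

Lemma E_Qm eps : eps%:M = Qm eps 0.
Proof. apply/matrixP => i j; rewrite !QmE !mxE ?QmE; ring. Qed.

End Mats.

End A.
Import A.

Module B.

Lemma char_poly_cast (T : comNzRingType) m k (E : k = m) (C : 'M[T]_k) (B : 'M[T]_m) :
  (forall i j, C i j = B (cast_ord E i) (cast_ord E j)) -> char_poly C = char_poly B.
Proof.
subst m => h; congr char_poly; apply/matrixP => i j; by rewrite h !cast_ord_id.
Qed.

Lemma char_poly_tr (T : comNzRingType) m (A : 'M[T]_m) : char_poly A^T = char_poly A.
Proof.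
rewrite /char_poly -det_tr; congr (\det _); apply/matrixP => i j; rewrite !mxE eq_sym //.
Qed.

Lemma char_poly_P (T : comNzRingType) n : (0 < n)%N -> char_poly (Pm n T) = 'X^n - 1.
Proof.
move=> n0.
rewrite -char_poly_tr.
set p : {poly T} := 'X^n - 1.
have mon : p \is monic by rewrite /p monicXnsubC.
have E : (size p).-1 = n by rewrite /p size_XnsubC.
rewrite -(companionmxK mon).
symmetry; apply: (@char_poly_cast T _ _ E) => i j.
rewrite !mxE /=.
have -> : (size p).-1.-1 = n.-1 by rewrite E.
rewrite /p coefB coefXn coefC.
have jn : (j != n :> nat). by rewrite -E neq_ltn ltn_ord.
rewrite (negPf jn) /= sub0r opprK.
rewrite /cyc_edge /=.
case: (eqVneq (i : nat) n.-1) => hi.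
  have -> : (i.+1 %% n = 0)%N by rewrite hi prednK // modnn.
  by case: (_ == 0%N).
have hi' : (i.+1 < n)%N.
  have hlt : (i < n)%N by rewrite -E ltn_ord.
  move/eqP: hi => hi; lia.
by rewrite modn_small // eq_sym.
Qed.

Lemma char_poly_Q (R : realType) n (c d : R) : (0 < n)%N -> d != 0 ->
  char_poly (Qm R n c d) = ('X - c%:P)^+n - (d%:P)^+n.
Proof.
move=> n0 d0.
set u : {poly R} := d^-1%:P.
have hu : d%:P * u = 1 by rewrite /u -polyCM divff.
set Y := u * ('X - c%:P).
have key : char_poly_mx (Qm R n c d) = d%:P *: map_mx (comp_poly Y) (char_poly_mx (Pm n R)).
  apply/matrixP => i j; rewrite /char_poly_mx !mxE.
  rewrite rmorphB /= -(mulr_natr 'X) -(mulr_natr c) rmorphM /= comp_polyX rmorph_nat comp_polyC.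
  rewrite rmorphD !rmorphM /= !rmorph_nat.
  rewrite mulrBr /Y !mulrA hu mul1r; ring.
rewrite /char_poly key detZ det_map_mx.
rewrite -/(char_poly _) char_poly_P // rmorphB /= rmorphXn /= comp_polyX rmorph1.
by rewrite mulrBr mulr1 -exprMn /Y mulrA hu mul1r.
Qed.

End B.
Import B.

Module C.
Set Implicit Arguments. Unset Strict Implicit.

Lemma char_poly_lblock (T : comNzRingType) m (A B C : 'M[T]_m) :
  char_poly (block_mx A 0 C B) = char_poly A * char_poly B.
Proof.
rewrite /char_poly /char_poly_mx scalar_mx_block map_block_mx map_mx0.
by rewrite opp_block_mx add_block_mx oppr0 addr0 det_lblock.
Qed.

Definition gp (R : realType) n (c d : R) : {poly R} :=
  \sum_(i < n) ('X - c%:P)^+(n.-1 - i) * (d%:P)^+i.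

Lemma gpE (R : realType) n (c d : R) : c + d = 1 ->
  ('X - 1) * gp n c d = ('X - c%:P)^+n - (d%:P)^+n.
Proof.
move=> hcd; rewrite subrXX /gp; congr (_ * _).
by rewrite -addrA -opprD -polyCD hcd.
Qed.

Lemma gp1 (R : realType) n (c d : R) : c + d = 1 -> (0 < n)%N ->
  (gp n c d).[1] = d ^+ n.-1 *+ n.
Proof.
move=> hcd n0; rewrite /gp horner_sum.
have -> : d ^+ n.-1 *+ n = \sum_(i < n) d ^+ n.-1.
  by rewrite sumr_const card_ord.
apply: eq_bigr => i _.
rewrite hornerM !horner_exp hornerXsubC hornerC.
have -> : 1 - c = d by rewrite -hcd addrC addKr.
rewrite -exprD subnK //.
by rewrite -ltnS prednK // ltn_ord.
Qed.

Section CP.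
Variable R : realType.
Variable n : nat.
Hypothesis Hn : (1 < n)%N.

Lemma aa_neq0 : aa R n != 0.
Proof. by rewrite /aa invr_eq0 pnatr_eq0 muln_eq0 /=; case: n Hn. Qed.

Lemma cpQ_factor c d : c + d = 1 -> d != 0 ->
  char_poly (Qm R n c d) = ('X - 1) * gp n c d.
Proof.
move=> hcd d0; rewrite char_poly_Q ?gpE //; by case: n Hn.
Qed.

Lemma cycM0_Q : cycM0 R n =
  block_mx (Qm R n (1 - aa R n) (aa R n)) 0 (Qm R n (aa R n) (- aa R n))
           (Qm R n (1 - 2 * aa R n) (2 * aa R n)).
Proof. by rewrite /cycM0 IL_Qm // cycL_Qm // cycS_Qm. Qed.

Lemma cp_M0 : char_poly (cycM0 R n) =
  ('X - 1)^+2 * (gp n (1 - aa R n) (aa R n) * gp n (1 - 2 * aa R n) (2 * aa R n)).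
Proof.
rewrite cycM0_Q char_poly_lblock !cpQ_factor.
- by rewrite expr2; ring.
- by rewrite subrK.
- by rewrite mulf_neq0 ?aa_neq0 // pnatr_eq0.
- by rewrite subrK.
- exact: aa_neq0.
Qed.

Lemma part1 : ('X - 1) ^+ 2 %| char_poly (cycM0 R n).
Proof. by rewrite cp_M0 dvdp_mulIl. Qed.

Lemma reducedE : reduced_charpoly R n =
  gp n (1 - aa R n) (aa R n) * gp n (1 - 2 * aa R n) (2 * aa R n).
Proof.
rewrite /reduced_charpoly cp_M0 mulrC mulpK //.
by rewrite expf_neq0 // polyXsubC_eq0.
Qed.

End CP.

End C.
Import C.

Module D.
Set Implicit Arguments. Unset Strict Implicit.
Local Open Scope complex_scope.

Section Trig.
Variable R : realType.
Variable n : nat.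
Hypothesis Hn : (1 < n)%N.

Let N : R := n%:R.
Definition th : R := 2 * pi / n%:R.
Definition om : R[i] := (cos th) +i* (sin th).

Lemma N_gt0 : 0 < N.
Proof. by rewrite /N ltr0n; case: n Hn. Qed.

Lemma thN : th * N = pi *+ 2.
Proof. rewrite /th -/N mulr2n; field. by rewrite gt_eqF // N_gt0. Qed.

Lemma th_gt0 : 0 < th.
Proof. by rewrite /th divr_gt0 // ?N_gt0 // mulr_gt0 // pi_gt0. Qed.

Lemma mth_le_pi m : (2 * m <= n)%N -> m%:R * th <= pi.
Proof.
move=> h.
have h' : 2 * m%:R <= N by rewrite /N -natrM ler_nat.
have := thN; have := th_gt0; have := pi_gt0 R; rewrite mulr2n => *.
nra.
Qed.

Lemma cos_le_half m : (0 < m)%N -> (2 * m <= n)%N -> cos (m%:R * th) <= cos th.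
Proof.
move=> m0 h.
have hth : th \in `[0, pi].
  rewrite in_itv /= (ltW th_gt0) /=.
  have h1 : 1 <= m%:R :> R by rewrite ler1n.
  have := mth_le_pi h; have := th_gt0; move=> *; nra.
have hm : m%:R * th \in `[0, pi].
  by rewrite in_itv /= mulr_ge0 ?ler0n ?(ltW th_gt0) //= mth_le_pi.
have [e|ne] := eqVneq (m%:R * th) th; first by rewrite e.
apply: ltW; rewrite (ltr_cos hth hm).
rewrite lt_neqAle eq_sym ne /=.
have h1 : 1 <= m%:R :> R by rewrite ler1n.
have := th_gt0; move=> *; nra.
Qed.

Lemma cos_le m : (0 < m < n)%N -> cos (m%:R * th) <= cos th.
Proof.
case/andP => m0 mn.
have [h|h] := leqP (2 * m) n; first exact: cos_le_half.
have -> : m%:R * th = pi *+ 2 - (n - m)%N%:R * th.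
  by rewrite natrB ?(ltnW mn) // mulrBl -/N (mulrC N) thN; ring.
rewrite -[pi *+ 2 - _]addrC cosD2pi cosN.
apply: cos_le_half; lia.
Qed.

Lemma cos_th_lt1 : cos th < 1.
Proof.
have hth : th \in `[0, pi].
  rewrite in_itv /= (ltW th_gt0) /=.
  by have := mth_le_pi (m:=1) ltac:(lia); rewrite mul1r.
have h0 : (0:R) \in `[0, pi] by rewrite in_itv /= lexx (ltW (pi_gt0 R)).
by rewrite -[X in _ < X]cos0 (ltr_cos h0 hth) th_gt0.
Qed.

Lemma om_exp m : om ^+ m = (cos (m%:R * th)) +i* (sin (m%:R * th)).
Proof.
elim: m => [|m IH]; first by rewrite expr0 mul0r cos0 sin0.
rewrite exprS IH /om.
rewrite -[m.+1]addn1 natrD mulrDl mul1r cosD sinD.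
simpc. congr (_ +i* _); ring.
Qed.

Lemma om_n : om ^+ n = 1.
Proof.
rewrite om_exp (mulrC _ th) -/N thN cos2pi sin2pi //.
Qed.

Lemma om_m_neq1 m : (0 < m < n)%N -> om ^+ m != 1.
Proof.
move=> hm; rewrite om_exp; apply/eqP => -[h _].
have := cos_le hm; rewrite h => h1.
by have := cos_th_lt1; rewrite ltNge h1.
Qed.

Lemma om_prim : n.-primitive_root om.
Proof.
have n0 : (0 < n)%N by lia.
have [m pm mn] := prim_order_exists n0 om_n.
have m0 := prim_order_gt0 pm.
have := dvdn_leq n0 mn; rewrite leq_eqVlt => /orP[/eqP <- //|ml].
have hm : (0 < m < n)%N by rewrite m0 ml.
by have := om_m_neq1 hm; rewrite (prim_expr_order pm) eqxx.
Qed.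

End Trig.

End D.
Import D.

Module E.
Set Implicit Arguments. Unset Strict Implicit.
Local Open Scope complex_scope.

Definition rr (R : realType) n : R := 1 - n%:R^-1 + (2 * n ^ 2)%:R^-1
                 + n%:R^-1 * (1 - (2 * n)%:R^-1) * cos (2 * pi / n%:R).

Lemma normc_ri (R : realType) (a b : R) : Normc.normc (a +i* b) = Num.sqrt (a^+2 + b^+2).
Proof. by []. Qed.

Lemma normC_normc (R : realType) (z : R[i]) : `|z| = (Normc.normc z)%:C.
Proof. by case: z. Qed.

Section Bound.
Variable R : realType.
Variable n : nat.
Hypothesis Hn : (1 < n)%N.

Local Notation a := (aa R n).
Local Notation om := (om R n).
Local Notation th := (th R n).

Lemma rrE : rr R n = (1 - a)^+2 + a^+2 + 2 * a * (1 - a) * cos th.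
Proof.
rewrite /rr /aa /th !natrM.
have n0 : (n%:R : R) != 0 by exact: n_neq0.
field; by rewrite n0.
Qed.

Lemma a_bounds : 0 < a /\ a <= 1/4.
Proof.
rewrite /aa natrM; split; first by rewrite invr_gt0 mulr_gt0 // ltr0n; case: n Hn.
have h2 : (2 : R) <= n%:R by rewrite ler_nat.
rewrite mul1r lef_pV2 ?posrE //; last by rewrite mulr_gt0 //; lra.
nra.
Qed.

Definition good_cd (c d : R) := (c = 1 - a /\ d = a) \/ (c = 1 - 2 * a /\ d = 2 * a).

Lemma bound_z m c d : (0 < m < n)%N -> good_cd c d ->
  Normc.normc (c%:C + d%:C * om ^+ m) <= Num.sqrt (rr R n).
Proof.
move=> hm hcd.
rewrite om_exp; simpc; rewrite normc_ri ler_wsqrtr // rrE.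
have hc := cos_le R Hn hm.
have hc1 := ltW (cos_th_lt1 R Hn).
have hs := cos2Dsin2 (m%:R * th).
move: (cos (m%:R * th)) (sin (m%:R * th)) (cos th) hc hc1 hs => x y t hxt ht1 hxy.
have [a0 a4] := a_bounds.
case: hcd => -[-> ->].
  rewrite [(_ * y)^+2]exprMn (_ : y^+2 = 1 - x^+2); last by rewrite -hxy; ring.
  have h : 0 <= a * (1 - a) * (t - x) by rewrite !mulr_ge0 //; lra.
  rewrite !expr2; nra.
rewrite [(_ * y)^+2]exprMn (_ : y^+2 = 1 - x^+2); last by rewrite -hxy; ring.
have h1 : 0 <= 1 - t by lra.
have h2 : 0 <= a * (1 - 2 * a) by rewrite mulr_ge0 //; lra.
have h3 : 0 <= a * (1 - 3 * a) by rewrite mulr_ge0 //; lra.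
have h4 : 0 <= (a * (1 - 2 * a)) * (t - x) by rewrite mulr_ge0 //; lra.
have h5 : 0 <= (a * (1 - 3 * a)) * (1 - t) by rewrite mulr_ge0 //; lra.
rewrite !expr2; nra.
Qed.

Lemma z0_norm : Normc.normc ((1 - a)%:C + a%:C * om) = Num.sqrt (rr R n).
Proof.
rewrite /om /D.om; simpc; rewrite normc_ri rrE; congr Num.sqrt.
have hs := cos2Dsin2 th.
have -> : (a * sin th) ^+ 2 = a^+2 * (1 - cos th ^+ 2).
  by rewrite -hs; ring.
ring.
Qed.

End Bound.

End E.
Import E.

Module F.
Set Implicit Arguments. Unset Strict Implicit.
Local Open Scope complex_scope.

Section Part2.
Variable R : realType.
Variable n : nat.
Hypothesis Hn : (1 < n)%N.
Local Notation a := (aa R n).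
Local Notation om := (om R n).

Lemma map_gp_eval (c d : R) (z : R[i]) : c + d = 1 ->
  (z - 1) * (map_poly (real_complex R) (gp n c d)).[z] = (z - c%:C)^+n - (d%:C)^+n.
Proof.
move=> hcd.
have := congr1 (fun p => (map_poly (real_complex R) p).[z]) (gpE n hcd) => /=.
rewrite !rmorphM !rmorphB /= !rmorphXn /= !rmorphB /= map_polyX !map_polyC /=.
rewrite hornerM !hornerE /= rmorph1; by move=> ->.
Qed.

Lemma gp_root (c d : R) (z : R[i]) : c + d = 1 -> d != 0 ->
  root (map_poly (real_complex R) (gp n c d)) z ->
  z != 1 /\ (z - c%:C)^+n = (d%:C)^+n.
Proof.
move=> hcd d0 /rootP hz.
have n0 : (0 < n)%N by case: n Hn.
split.
  apply/eqP => z1; move: hz; rewrite z1 -(rmorph1 (real_complex R)) horner_map /=.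
  rewrite gp1 // => -[] /eqP; rewrite mulrn_eq0 expf_eq0 (negPf d0) andbF orbF.
  by case: n Hn.
by apply/eqP; rewrite -subr_eq0 -map_gp_eval // hz mulr0.
Qed.

Lemma gp_root_form (c d : R) (z : R[i]) : c + d = 1 -> d != 0 ->
  root (map_poly (real_complex R) (gp n c d)) z ->
  exists m, (0 < m < n)%N /\ z = c%:C + d%:C * om ^+ m.
Proof.
move=> hcd d0 hr.
have [z1 hz] := gp_root hcd d0 hr.
have dC0 : d%:C != 0 by rewrite (inj_eq (@complexI _)).
set w := (z - c%:C) / d%:C.
have hw : w ^+ n = 1.
  by rewrite /w exprMn hz exprVn divff // expf_neq0.
have [i hi] := prim_rootP (om_prim R Hn) hw.
exists i; split; last first.
  by rewrite -hi /w mulrC divfK // addrC subrK.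
rewrite ltn_ord andbT lt0n; apply/eqP => i0.
move: hi; rewrite i0 expr0 /w => /(congr1 (fun x => x * d%:C)).
rewrite divfK // mul1r => /eqP; rewrite subr_eq => /eqP h.
have {}h : z = 1 by rewrite h -rmorphD addrC hcd rmorph1.
by move: z1; rewrite h eqxx.
Qed.

Lemma part2 : largest_root_modulus (reduced_charpoly R n) (Num.sqrt (rr R n)).
Proof.
have [a0 _] := a_bounds R Hn.
have a0' : a != 0 by rewrite gt_eqF.
have a20 : 2 * a != 0 by rewrite mulf_neq0 // pnatr_eq0.
split.
  exists ((1 - a)%:C + a%:C * om); last by rewrite normC_normc z0_norm.
  rewrite reducedE // rmorphM /= rootM; apply/orP; left.
  apply/rootP.
  have hcd : (1 - a) + a = 1 by rewrite subrK.
  have := map_gp_eval ((1 - a)%:C + a%:C * om) hcd.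
  have -> : (1 - a)%:C + a%:C * om - (1 - a)%:C = a%:C * om by rewrite addrC addKr.
  rewrite exprMn (om_n R Hn) mulr1 subrr => /eqP.
  rewrite mulf_eq0 => /orP[|/eqP //].
  have -> : (1 - a)%:C + a%:C * om - 1 = a%:C * (om - 1).
    by rewrite rmorphB rmorph1 /=; ring.
  have h1 : om != 1 by have := @om_m_neq1 R n Hn 1 Hn; rewrite expr1.
  rewrite mulf_eq0 subr_eq0 (negPf h1) orbF (inj_eq (@complexI _)).
  by rewrite (negPf a0').
move=> z.
rewrite reducedE // rmorphM /= rootM => /orP[] hr.
  have [|m [hm ->]] := gp_root_form (c:=1 - a) (d:=a) _ a0' hr; first by rewrite subrK.
  by rewrite normC_normc lecR bound_z //; left.
have [|m [hm ->]] := gp_root_form (c:=1 - 2 * a) (d:=2 * a) _ a20 hr; first by rewrite subrK.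
by rewrite normC_normc lecR bound_z //; right.
Qed.

End Part2.

End F.
Import F.

Module G.
Set Implicit Arguments. Unset Strict Implicit.
Local Open Scope complex_scope.

Section Rec.
Variable R : realType.
Local Notation C := R[i].
Local Notation nc := (@Normc.normc R).

Lemma nc_ge0 (z : C) : 0 <= nc z.
Proof. by case: z => x y; rewrite /Normc.normc sqrtr_ge0. Qed.

Lemma ncD (x y : C) : nc (x + y) <= nc x + nc y.
Proof. exact: (@le_normcD R x y). Qed.

Lemma ncN (x : C) : nc (- x) = nc x.
Proof. exact: (@normcN R x). Qed.

Lemma ncM (x y : C) : nc (x * y) = nc x * nc y.
Proof. exact: Normc.normcM. Qed.

Lemma ncB (x y : C) : nc (x - y) = nc (y - x).
Proof. by rewrite -ncN opprB. Qed.

Lemma ncR (x : R) : nc (x%:C) = `|x|.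
Proof. by rewrite /Normc.normc /= expr0n /= addr0 sqrtr_sqr. Qed.

Lemma ncX (x : C) k : nc (x ^+ k) = nc x ^+ k.
Proof.
elim: k => [|k IH]; first by rewrite !expr0 (_ : (1 : C) = 1%:C) // ncR normr1.
by rewrite !exprS ncM IH.
Qed.

Lemma nc_eq0 (x : C) : (nc x == 0) = (x == 0).
Proof.
apply/eqP/eqP => [/Normc.eq0_normc //|->].
by rewrite (_ : (0 : C) = 0%:C) // ncR normr0.
Qed.

Lemma root_bound (al be l : C) (e r : R) : 0 <= e ->
  nc al <= r -> nc be <= r -> al - be = 1 - al -> 1 - al != 0 ->
  (l - al) * (l - be) + e%:C * (l - 1) = 0 -> nc l <= r + 3 * e.
Proof.
move=> e0 har hbr hab hd heq.
set x := nc (l - al); set y := nc (l - be); set D := nc (1 - al).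
have D0 : 0 < D by rewrite lt_def nc_ge0 andbT nc_eq0.
have x0 : 0 <= x by exact: nc_ge0.
have y0 : 0 <= y by exact: nc_ge0.
have h1 : x * y = e * nc (l - 1).
  have : (l - al) * (l - be) = - (e%:C * (l - 1)) by rewrite -[LHS]subr0 -heq; ring.
  by move/(congr1 nc); rewrite ncN !ncM ncR ger0_norm.
have h2 : nc (l - 1) <= x + D.
  have -> : l - 1 = (l - al) + - (1 - al) by ring.
  by apply: (le_trans (ncD _ _)); rewrite ncN.
have h3 : D <= x + y.
  rewrite /D (_ : 1 - al = (l - be) + - (l - al)); last by rewrite -hab; ring.
  by apply: (le_trans (ncD _ _)); rewrite ncN addrC.
have h4 : nc l <= r + x.
  have : nc l <= nc al + x.
    by rewrite {1}(_ : l = al + (l - al)); [apply: ncD | ring].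
  by move/le_trans; apply; rewrite lerD2r.
have h5 : nc l <= r + y.
  have : nc l <= nc be + y.
    by rewrite {1}(_ : l = be + (l - be)); [apply: ncD | ring].
  by move/le_trans; apply; rewrite lerD2r.
have hxy : x * y <= e * (x + D) by rewrite h1 ler_wpM2l.
have [hx|hx] := leP (2 * x) D.
  have hy : D / 2 <= y by lra.
  have hA : x * (D / 2) <= x * y by rewrite ler_wpM2l.
  have hB : e * (x + D) <= e * (3 * D / 2) by rewrite ler_wpM2l //; lra.
  have hC : x * D <= (3 * e) * D by lra.
  have : x <= 3 * e by rewrite -(ler_pM2r D0).
  lra.
have xp : 0 < x by lra.
have hB : e * (x + D) <= e * (3 * x) by rewrite ler_wpM2l //; lra.
have : y * x <= (3 * e) * x by lra.
rewrite ler_pM2r // => hy.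
lra.
Qed.

Lemma geo_bound (u : nat -> C) (t s l1 l2 : C) (rho : R) :
  0 <= rho -> rho < 1 -> nc l1 <= rho -> nc l2 <= rho ->
  l1 + l2 = t -> l1 * l2 = s ->
  (forall k, u k.+2 = t * u k.+1 - s * u k) ->
  exists K, forall k, nc (u k) <= K * ((1 + rho) / 2) ^+ k.
Proof.
move=> r0 r1 hl1 hl2 ht hs hrec.
set q := (1 + rho) / 2.
have qr : 0 < q - rho by rewrite /q; lra.
have q0 : 0 <= q by rewrite /q; lra.
set E := nc (u 1%N - l2 * u 0%N).
have hE : forall k, nc (u k.+1 - l2 * u k) <= E * rho ^+ k.
  elim=> [|k IH]; first by rewrite expr0 mulr1.
  have -> : u k.+2 - l2 * u k.+1 = l1 * (u k.+1 - l2 * u k).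
    by rewrite hrec -ht -hs; ring.
  rewrite ncM exprS mulrCA; apply: ler_pM => //; exact: nc_ge0.
exists (nc (u 0%N) + E / (q - rho)).
have E0 : 0 <= E by exact: nc_ge0.
set K := nc (u 0%N) + E / (q - rho).
have KE : E <= K * (q - rho).
  rewrite /K mulrDl divfK ?gt_eqF //; have := nc_ge0 (u 0%N); have := qr.
  move=> *; nra.
elim=> [|k IH]; first by rewrite expr0 mulr1 /K lerDl divr_ge0 // ltW.
have -> : u k.+1 = l2 * u k + (u k.+1 - l2 * u k) by ring.
apply: (le_trans (ncD _ _)); rewrite ncM.
have h1 : nc l2 * nc (u k) <= rho * (K * q ^+ k) by apply: ler_pM => //; exact: nc_ge0.
have h2 : E * rho ^+ k <= E * q ^+ k.
  by rewrite ler_wpM2l // lerXn2r // ?nnegrE //; rewrite /q; lra.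
have h3 := hE k.
have h4 : 0 <= q ^+ k by exact: exprn_ge0.
have h5 : E * q ^+ k <= K * (q - rho) * q ^+ k by rewrite ler_wpM2r.
rewrite exprS.
have : rho * (K * q ^+ k) + K * (q - rho) * q ^+ k = K * (q * q ^+ k) by ring.
lra.
Qed.

End Rec.

End G.
Import G.

Module H.
Set Implicit Arguments. Unset Strict Implicit.
Local Open Scope complex_scope.

Section Mode.
Variable R : realType.
Local Notation C := R[i].
Local Notation nc := (@Normc.normc R).

Lemma mode_bound (al : C) (e r : R) (X S : nat -> C) :
  0 <= e -> nc al <= r -> nc (2 * al - 1) <= r -> 1 - al != 0 -> r + 3 * e < 1 ->
  (forall k, X k.+1 = al * X k + e%:C * S k) ->
  (forall k, S k.+1 = (1 - al) * X k + (2 * al - 1 - e%:C) * S k) ->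
  exists K, forall k, nc (X k) <= K * ((1 + (r + 3 * e)) / 2) ^+ k /\
                      nc (S k) <= K * ((1 + (r + 3 * e)) / 2) ^+ k.
Proof.
move=> e0 har hbr hd hr1 hX hS.
set be := 2 * al - 1.
set t := al + be - e%:C.
set s := al * be - e%:C.
set sq := sqrtc (t ^+ 2 - 4 * s).
have two0 : (2 : C) != 0 by rewrite pnatr_eq0.
set l1 := (t + sq) / 2.
set l2 := (t - sq) / 2.
have ht : l1 + l2 = t by rewrite /l1 /l2; field.
have hs : l1 * l2 = s.
  have hsq : sq ^+ 2 = t ^+ 2 - 4 * s by rewrite /sq sqr_sqrtc.
  rewrite /l1 /l2; apply: (mulIf (mulf_neq0 two0 two0)).
  rewrite (_ : (t + sq) / 2 * ((t - sq) / 2) * (2 * 2) = t ^+ 2 - sq ^+ 2); last by field.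
  by rewrite hsq; ring.
have hab : al - be = 1 - al by rewrite /be; ring.
have r0 : 0 <= r by apply: le_trans har; exact: nc_ge0.
have hroot : forall l, l = l1 \/ l = l2 -> nc l <= r + 3 * e.
  move=> l hl; apply: (root_bound e0 har hbr hab hd).
  have : l ^+ 2 - t * l + s = 0.
    by rewrite -ht -hs; case: hl => ->; ring.
  by rewrite /t /s /be => <-; ring.
have rho0 : 0 <= r + 3 * e by lra.
have recX : forall k, X k.+2 = t * X k.+1 - s * X k.
  by move=> k; rewrite !hX hS /t /s /be; ring.
have recS : forall k, S k.+2 = t * S k.+1 - s * S k.
  by move=> k; rewrite !hS hX /t /s /be; ring.
have hl1 := hroot l1 (or_introl erefl).
have hl2 := hroot l2 (or_intror erefl).
have [K1 hK1] := geo_bound rho0 hr1 hl1 hl2 ht hs recX.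
have [K2 hK2] := geo_bound rho0 hr1 hl1 hl2 ht hs recS.
exists (K1 + K2) => k.
have q0 : 0 <= ((1 + (r + 3 * e)) / 2) ^+ k by apply: exprn_ge0; lra.
have := hK1 k; have := hK2 k.
have := nc_ge0 (X k); have := nc_ge0 (S k).
move=> *; split; nra.
Qed.

End Mode.

End H.
Import H.

Module I.
Set Implicit Arguments. Unset Strict Implicit.
Local Open Scope complex_scope.

Section DFT.
Variable R : realType.
Variable n : nat.
Hypothesis Hn : (1 < n)%N.
Local Notation C := R[i].
Local Notation nc := (@Normc.normc R).
Local Notation a := (aa R n).
Local Notation om := (om R n).

Definition Fz (z : C) (v : 'cV[R]_n) : C := \sum_(i < n) (v i 0)%:C * z ^+ i.

Lemma FzD z (u w : 'cV[R]_n) : Fz z (u + w) = Fz z u + Fz z w.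
Proof. by rewrite /Fz -big_split; apply: eq_bigr => i _; rewrite mxE rmorphD mulrDl. Qed.

Lemma Fz0 z : Fz z 0 = 0.
Proof. by rewrite /Fz big1 // => i _; rewrite mxE mul0r. Qed.

Lemma Qm_mul c d (v : 'cV[R]_n) i : (Qm R n c d *m v) i 0 = c * v i 0 + d * v (ord_pred i) 0.
Proof.
rewrite /Qm mulmxDl mul_scalar_mx -scalemxAl !mxE; congr (_ + d * _).
rewrite -(@sum_edge_col R n (fun j => v j 0) i); apply: eq_bigr => j _.
by rewrite mxE; case: cyc_edge; rewrite ?mul1r ?mul0r.
Qed.

Lemma F_Q z c d v : z ^+ n = 1 -> Fz z (Qm R n c d *m v) = (c%:C + d%:C * z) * Fz z v.
Proof.
move=> hz; rewrite /Fz.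
under eq_bigr do rewrite Qm_mul rmorphD !rmorphM mulrDl.
rewrite big_split /= mulrDl !mulr_sumr; congr (_ + _).
  by apply: eq_bigr => i _; rewrite mulrA.
rewrite (reindex (@ordS n)); last first.
  by exists (@ord_pred n) => x _; [apply: ordSK | apply: ord_predK].
apply: eq_bigr => j _; rewrite ordSK /= (expr_mod _ hz) exprS; ring.
Qed.

Lemma nc_om k : nc (om ^+ k) = 1.
Proof.
rewrite ncX (_ : nc om = 1) ?expr1n // /D.om normc_ri.
by rewrite cos2Dsin2 sqrtr1.
Qed.

Lemma geo_sum (y : C) : y ^+ n = 1 -> y != 1 -> \sum_(m < n) y ^+ m = 0.
Proof.
move=> hy y1; have := subrX1 y n; rewrite hy subrr => /esym/eqP.
by rewrite mulf_eq0 subr_eq0 (negPf y1) /= => /eqP.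
Qed.

Lemma dvd_cases (i j : 'I_n) : (n %| j + (n - i))%N = (j == i).
Proof.
have hi := ltn_ord i; have hj := ltn_ord j.
case: (leqP i j) => hij.
  rewrite (_ : j + (n - i) = (j - i) + n)%N; last by lia.
  rewrite dvdn_addl ?dvdnn //.
  have [e|ne] := eqVneq j i; first by rewrite e subnn dvdn0.
  have ne' : (val j != val i) by [].
  have hp : (0 < j - i)%N by rewrite subn_gt0 ltn_neqAle hij andbT eq_sym ne'.
  by apply/negbTE/negP => /(dvdn_leq hp); lia.
have h1 : (0 < j + (n - i))%N by lia.
have h2 : (j + (n - i) < n)%N by lia.
have -> : (j == i) = false by apply/eqP => e; rewrite e ltnn in hij.
by apply/negbTE; apply/negP => /(dvdn_leq h1); lia.
Qed.

Lemma inner_eq (v : 'cV[R]_n) (i j : 'I_n) :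
  \sum_(m < n) (v j 0)%:C * (om ^+ m) ^+ j * (om ^+ m) ^+ (n - i) =
  (v j 0)%:C * (if j == i then n%:R else 0).
Proof.
have -> : \sum_(m < n) (v j 0)%:C * (om ^+ m) ^+ j * (om ^+ m) ^+ (n - i) =
          (v j 0)%:C * \sum_(m < n) (om ^+ (j + (n - i))) ^+ m.
  rewrite mulr_sumr; apply: eq_bigr => m _.
  by rewrite -mulrA -exprD -!exprM mulnC.
have [->|ne] := eqVneq j i.
  rewrite subnKC ?(ltnW (ltn_ord i)) // (om_n R Hn).
  by under eq_bigr do rewrite expr1n; rewrite sumr_const card_ord.
rewrite geo_sum ?mulr0 //.
  by rewrite -exprM mulnC exprM (om_n R Hn) expr1n.
by rewrite -(prim_order_dvd (om_prim R Hn)) dvd_cases.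
Qed.

Lemma inversion (v : 'cV[R]_n) i :
  (v i 0)%:C * n%:R = \sum_(m < n) Fz (om ^+ m) v * (om ^+ m) ^+ (n - i).
Proof.
rewrite /Fz; under eq_bigr do rewrite mulr_suml.
rewrite exchange_big /=.
under eq_bigr => j _ do rewrite inner_eq.
rewrite (bigD1 i) //= eqxx big1 ?addr0 // => j /negbTE ->.
by rewrite mulr0.
Qed.

End DFT.

End I.
Import I.

Module J.
Set Implicit Arguments. Unset Strict Implicit.
Import numFieldNormedType.Exports.
Local Open Scope classical_set_scope.

Lemma cvg_geo_bound (R : realType) (f : nat -> R) (l K q : R) :
  0 <= q -> q < 1 -> (forall k, `|f k - l| <= K * q ^+ k) -> f @ \oo --> l.
Proof.
move=> q0 q1 hb.
have g0 : (fun k => K * q ^+ k) @ \oo --> (0 : R).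
  have := @cvg_geometric R K q; rewrite ger0_norm //; move=> /(_ q1).
  by apply: cvg_trans; apply: near_eq_cvg; apply: nearW => k.
apply: (squeeze_cvgr (f := fun k => l - K * q ^+ k) (h := fun k => l + K * q ^+ k)).
- apply: nearW => k; have := hb k; rewrite ler_distl => /andP[h1 h2].
  by rewrite h1 h2.
- rewrite -[X in _ --> X]subr0; apply: cvgB => //; exact: cvg_cst.
- rewrite -[X in _ --> X]addr0; apply: cvgD => //; exact: cvg_cst.
Qed.

End J.
Import J.

Module K.
Set Implicit Arguments. Unset Strict Implicit.
Import numFieldNormedType.Exports.
Local Open Scope complex_scope.
Local Open Scope classical_set_scope.

Lemma sum_bound (R : realType) (g : nat -> nat -> R) (q : R) lo hi :
  (forall m, (lo <= m < hi)%N -> exists K, forall k, g m k <= K * q ^+ k) ->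
  exists K, forall k, \sum_(lo <= m < hi) g m k <= K * q ^+ k.
Proof.
elim: hi => [|hi IH] h.
  by exists 0 => k; rewrite big_geq // mul0r.
have [lh|lh] := leqP lo hi; last first.
  by exists 0 => k; rewrite big_geq // mul0r.
have [K1 h1] := IH (fun m hm => h m ltac:(lia)).
have [K2 h2] := h hi ltac:(lia).
exists (K1 + K2) => k; rewrite big_nat_recr //= mulrDl.
exact: lerD.
Qed.

Lemma nc_sum (R : realType) (I : Type) (r : seq I) (F : I -> R[i]) :
  Normc.normc (\sum_(i <- r) F i) <= \sum_(i <- r) Normc.normc (F i).
Proof.
elim: r => [|x r IH]; first by rewrite !big_nil (_ : (0 : R[i]) = 0%:C) // ncR normr0.
rewrite !big_cons; apply: le_trans (ncD _ _) _; exact: lerD.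
Qed.

Section Sys.
Variable R : realType.
Variable n : nat.
Hypothesis Hn : (1 < n)%N.
Local Notation C := R[i].
Local Notation nc := (@Normc.normc R).
Local Notation a := (aa R n).
Local Notation om := (om R n).
Variable eps : R.
Variable x0 : 'cV[R]_n.

Lemma cycM_Q : cycM n eps = block_mx (Qm R n (1 - a) a) (Qm R n eps 0) (Qm R n a (- a))
   (Qm R n (1 - 2 * a - eps) (2 * a)).
Proof. by rewrite /cycM (SE_Qm R n Hn) (IL_Qm R n) (cycL_Qm R n) (E_Qm R n). Qed.

Definition xs k := usubmx (cyc_state eps x0 k).
Definition ss k := dsubmx (cyc_state eps x0 k).

Lemma xs_rec k : xs k.+1 = Qm R n (1 - a) a *m xs k + Qm R n eps 0 *m ss k.
Proof.
rewrite /xs /ss (_ : cyc_state eps x0 k.+1 = cycM n eps *m cyc_state eps x0 k) //.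
by rewrite -{1}(vsubmxK (cyc_state eps x0 k)) cycM_Q mul_block_col col_mxKu.
Qed.

Lemma ss_rec k : ss k.+1 = Qm R n a (- a) *m xs k + Qm R n (1 - 2 * a - eps) (2 * a) *m ss k.
Proof.
rewrite /xs /ss (_ : cyc_state eps x0 k.+1 = cycM n eps *m cyc_state eps x0 k) //.
by rewrite -{1}(vsubmxK (cyc_state eps x0 k)) cycM_Q mul_block_col col_mxKd.
Qed.

Lemma xs0 : xs 0 = x0. Proof. by rewrite /xs /cyc_state /= col_mxKu. Qed.
Lemma ss0 : ss 0 = 0. Proof. by rewrite /ss /cyc_state /= col_mxKd. Qed.

Definition Xm z k := Fz z (xs k).
Definition Sm z k := Fz z (ss k).

Lemma X_rec z k : z ^+ n = 1 ->
  Xm z k.+1 = ((1 - a)%:C + a%:C * z) * Xm z k + eps%:C * Sm z k.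
Proof.
by move=> hz; rewrite /Xm /Sm xs_rec FzD !F_Q // rmorph0 mul0r addr0.
Qed.

Lemma S_rec z k : z ^+ n = 1 ->
  Sm z k.+1 = (a%:C + (- a)%:C * z) * Xm z k + ((1 - 2 * a - eps)%:C + (2 * a)%:C * z) * Sm z k.
Proof. by move=> hz; rewrite /Xm /Sm ss_rec FzD !F_Q. Qed.

Lemma mode1 k : Sm 1 k = 0 /\ Xm 1 k = (\sum_i x0 i 0)%:C.
Proof.
elim: k => [|k [IHS IHX]].
  rewrite /Sm /Xm ss0 xs0 Fz0; split => //.
  by rewrite rmorph_sum; apply: eq_bigr => i _; rewrite expr1n mulr1.
rewrite S_rec ?expr1n // X_rec ?expr1n // IHS IHX !mulr0 !addr0 !mulr1.
split; last by rewrite -rmorphD subrK rmorph1 mul1r.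
by rewrite -rmorphD addrN rmorph0 mul0r.
Qed.

Hypothesis eps0 : 0 <= eps.
Hypothesis heps : Num.sqrt (rr R n) + 3 * eps < 1.
Local Notation r := (Num.sqrt (rr R n)).
Local Notation q := ((1 + (Num.sqrt (rr R n) + 3 * eps)) / 2).

Lemma modes m : (0 < m < n)%N -> exists K, forall k,
  nc (Xm (om ^+ m) k) <= K * q ^+ k /\ nc (Sm (om ^+ m) k) <= K * q ^+ k.
Proof.
move=> hm.
set z := om ^+ m.
have hz : z ^+ n = 1 by rewrite /z -exprM mulnC exprM (om_n R Hn) expr1n.
set al := (1 - a)%:C + a%:C * z.
have h1 : nc al <= r by apply: bound_z => //; left.
have e2 : 2 * al - 1 = (1 - 2 * a)%:C + (2 * a)%:C * z.
  by rewrite /al !rmorphB !rmorphM /= rmorph1 rmorph_nat; ring.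
have h2 : nc (2 * al - 1) <= r by rewrite e2; apply: bound_z => //; right.
have h3 : 1 - al != 0.
  have -> : 1 - al = a%:C * (1 - z) by rewrite /al rmorphB rmorph1; ring.
  rewrite mulf_neq0 //; last by rewrite subr_eq0 eq_sym om_m_neq1.
  by rewrite (inj_eq (@complexI _)) gt_eqF //; case: (a_bounds R Hn).
apply: (mode_bound eps0 h1 h2 h3 heps).
  by move=> k; rewrite X_rec.
move=> k; rewrite S_rec //; congr (_ * _ + _ * _).
  by rewrite /al rmorphB rmorph1 rmorphN; ring.
by rewrite e2 !rmorphB /=; ring.
Qed.

Lemma q_bounds : 0 <= q /\ q < 1.
Proof.
have : 0 <= r by exact: sqrtr_ge0.
move: heps => hh h0; split.
  by rewrite divr_ge0 // !addr_ge0 // mulr_ge0.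
by rewrite ltr_pdivrMr // mul1r; move: hh h0; set t := Num.sqrt _ => *; lra.
Qed.

Lemma split_inv (v : 'cV[R]_n) i :
  (v i 0)%:C * n%:R = Fz 1 v + \sum_(1 <= m < n) Fz (om ^+ m) v * (om ^+ m) ^+ (n - i).
Proof.
rewrite (inversion Hn) -(big_mkord xpredT (fun m => Fz (om ^+ m) v * (om ^+ m) ^+ (n - i))).
by rewrite big_ltn ?expr0 ?expr1n ?mulr1 //; lia.
Qed.

Lemma x_conv i : (fun k => xs k i 0) @ \oo --> (\sum_j x0 j 0) / n%:R.
Proof.
have hmodes : forall m, (1 <= m < n)%N -> exists K, forall k, nc (Xm (om ^+ m) k) <= K * q ^+ k.
  by move=> m hm; have [K h] := modes hm; exists K => k; case: (h k).
have [K hK] := sum_bound hmodes.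
have [q0 q1] := q_bounds.
have nR0 : (0 : R) < n%:R by rewrite ltr0n; lia.
apply: (cvg_geo_bound (K := K / n%:R) q0 q1) => k.
rewrite -(ler_pM2r nR0) mulrAC divfK ?gt_eqF //.
have : (xs k i 0 - (\sum_j x0 j 0) / n%:R)%:C * n%:R =
       \sum_(1 <= m < n) Xm (om ^+ m) k * (om ^+ m) ^+ (n - i).
  rewrite rmorphB mulrBl split_inv -/(Xm 1 k) (proj2 (mode1 k)).
  rewrite -(rmorph_nat (real_complex R) n) -rmorphM /= divfK ?gt_eqF //.
  by rewrite addrAC subrr add0r.
move/(congr1 nc); rewrite ncM -(rmorph_nat (real_complex R) n) !ncR (ger0_norm (ltW nR0)) => ->.
apply: le_trans (nc_sum _ _) _; apply: le_trans (hK k).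
by apply: ler_sum => m _; rewrite ncM ncX nc_om expr1n mulr1.
Qed.

Lemma s_conv i : (fun k => ss k i 0) @ \oo --> (0 : R).
Proof.
have hmodes : forall m, (1 <= m < n)%N -> exists K, forall k, nc (Sm (om ^+ m) k) <= K * q ^+ k.
  by move=> m hm; have [K h] := modes hm; exists K => k; case: (h k).
have [K hK] := sum_bound hmodes.
have [q0 q1] := q_bounds.
have nR0 : (0 : R) < n%:R by rewrite ltr0n; lia.
apply: (cvg_geo_bound (K := K / n%:R) q0 q1) => k.
rewrite subr0 -(ler_pM2r nR0) mulrAC divfK ?gt_eqF //.
have := split_inv (ss k) i; rewrite -/(Sm 1 k) (proj1 (mode1 k)) add0r.
move/(congr1 nc); rewrite ncM -(rmorph_nat (real_complex R) n) !ncR (ger0_norm (ltW nR0)) => ->.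
apply: le_trans (nc_sum _ _) _; apply: le_trans (hK k).
by apply: ler_sum => m _; rewrite ncM ncX nc_om expr1n mulr1.
Qed.

End Sys.

End K.
Import K.

Module Z.

Lemma eps_bound (R : realType) (r eps : R) : 0 < eps ->
  eps < Num.sqrt 2 / (3 + Num.sqrt 5) * (1 - r) -> r + 3 * eps < 1.
Proof.
move=> e0 he.
have s2 : Num.sqrt 2 ^+ 2 = 2 :> R by rewrite sqr_sqrtr // ler0n.
have s5 : Num.sqrt 5 ^+ 2 = 5 :> R by rewrite sqr_sqrtr // ler0n.
have s20 : 0 <= Num.sqrt 2 :> R by exact: sqrtr_ge0.
have s50 : 0 <= Num.sqrt 5 :> R by exact: sqrtr_ge0.
move: he s2 s5 s20 s50; set s := Num.sqrt 2; set t := Num.sqrt 5 => he s2 s5 s20 s50.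
have hs : s < 3 / 2 by nra.
have ht : 2 < t by nra.
set c := s / (3 + t).
have {he} he : eps < c * (1 - r) := he.
have c0 : 0 < c by rewrite /c divr_gt0 //; [nra | lra].
have c3 : 3 * c < 1.
  by rewrite /c mulrA ltr_pdivrMr; [lra | lra].
have hr : 0 < 1 - r.
  rewrite ltNge; apply/negP => h.
  have : c * (1 - r) <= 0 by rewrite mulr_ge0_le0 // ltW.
  lra.
have : 0 < (1 - 3 * c) * (1 - r) by rewrite mulr_gt0 //; lra.
nra.
Qed.


End Z.
Import Z.

Unset Implicit Arguments.
Theorem proposition5 (R : realType) (n : nat) : (1 < n)%N ->
  let r : R := Num.sqrt (1 - n%:R^-1 + (2 * n ^ 2)%:R^-1
                 + n%:R^-1 * (1 - (2 * n)%:R^-1) * cos (2 * pi / n%:R)) in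
  (('X - 1) ^+ 2 %| char_poly (cycM0 R n))%R /\
  largest_root_modulus (reduced_charpoly R n) r /\
  (forall eps : R, 0 < eps -> eps < Num.sqrt 2 / (3 + Num.sqrt 5) * (1 - r) ->
     average_consensus n eps).
Proof.
move=> Hn r.
split; first exact: part1.
split; first exact: (part2 R Hn).
move=> eps e0 he x0 xa i.
have hb : Num.sqrt (rr R n) + 3 * eps < 1 := @eps_bound R r eps e0 he.
split.
  exact: (x_conv Hn (ltW e0) hb).
exact: (s_conv Hn x0 (ltW e0) hb).
Qed.
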